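(* Let $f: D\to\{0,1\}$, $D\subseteq\{0,1\}^n$, be a non-constant $n$-bit partial Boolean function. Then $f$ can be computed exactly by a quantum 1-query algorithm if and only if there exists a vector $\vec\beta=(\beta_0,\beta_1,\dots,\beta_n)^T$ with all $\beta_i\ge 0$, $\beta_0+\beta_1+\cdots+\beta_n=1$, and $$\beta_0+\sum_{i=1}^n \beta_i(-1)^{x_i\oplus y_i}=0$$ for all $x\in\{x\in D: f(x)=0\}$ and all $y\in\{y\in D: f(y)=1\}$ (i.e. $(|F(x\oplus y)\rangle_1)^T\vec\beta=0$).
   Context: An $n$-bit partial Boolean function is a map $f:D\to\{0,1\}$ with $D\subseteq\{0,1\}^n$. For $z\in\{0,1\}^n$, $|F(z)\rangle_1=(1,(-1)^{z_1},\dots,(-1)^{z_n})^T\in\mathbb{R}^{n+1}$. A quantum 1-query algorithm works in a finite-dimensional Hilbert space with orthonormal basis $\{|i,j'\rangle\}$, where $i\in\{0,1,\dots,n\}$ and $j'$ ranges over a finite set; for input $x\in\{0,1\}^n$ the oracle is the unitary $O_x|i,j'\rangle=(-1)^{x_i}|i,j'\rangle$ for $i\in\{1,\dots,n\}$ and $O_x|0,j'\rangle=|0,j'\rangle$. The algorithm consists of an initial state $|\psi_0\rangle$, input-independent unitaries $U_0,U_1$, and a projective measurement with outcomes in $\{0,1\}$ applied to $U_1O_xU_0|\psi_0\rangle$. It computes $f$ exactly if for every $x\in D$ the outcome equals $f(x)$ with probability $1$. *)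

(* Defs.v *)
From HB Require Import structures.
From mathcomp Require Import all_boot all_order all_algebra.
From mathcomp Require Import complex.
From mathcomp Require Import reals.
Set Implicit Arguments. Unset Strict Implicit. Unset Printing Implicit Defensive.
Import Order.TTheory GRing.Theory Num.Theory.
Local Open Scope ring_scope.

Definition bits (n : nat) := {ffun 'I_n -> bool}.

Definition bxor (n : nat) (x y : bits n) : bits n := [ffun i => x i (+) y i].

(* The i-th entry (i = 0..n) of |F(z)>_1 = (1, (-1)^{z_1}, ..., (-1)^{z_n}),
   as an element of an arbitrary ring.  Index 0 gives 1; index (lift ord0 k)
   gives (-1)^{z_k}. *)
Definition Fsign {K : pzRingType} (n : nat) (z : bits n) (i : 'I_n.+1) : K :=
  match unlift ord0 i with
  | Some k => (-1) ^+ z k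
  | None => 1
  end.

Section Quantum.
Variable R : realType.
Local Notation C := (complex R).

(* Basis of the Hilbert space: pairs (i, j') with i in {0..n}, j' in a finite
   set of size m. *)
Definition qidx (n m : nat) := ('I_n.+1 * 'I_m)%type.

Definition qvec (n m : nat) := qidx n m -> C.
Definition qop (n m : nat) := qidx n m -> qidx n m -> C.

Definition qapply (n m : nat) (U : qop n m) (v : qvec n m) : qvec n m :=
  fun a => \sum_(b : qidx n m) U a b * v b.

Definition qnorm2 (n m : nat) (v : qvec n m) : C :=
  \sum_(a : qidx n m) v a * (v a)^*.

Definition qid (n m : nat) : qop n m := fun a b => (a == b)%:R.

Definition qmul (n m : nat) (A B : qop n m) : qop n m :=
  fun a b => \sum_(c : qidx n m) A a c * B c b.

Definition qadj (n m : nat) (A : qop n m) : qop n m := fun a b => (A b a)^*.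

Definition unitary (n m : nat) (U : qop n m) : Prop :=
  qmul U (qadj U) = qid (n:=n) (m:=m) /\ qmul (qadj U) U = qid (n:=n) (m:=m).

Definition oracle (n m : nat) (x : bits n) : qop n m :=
  fun a b => (a == b)%:R * Fsign x a.1.

Definition proj_meas (n m : nat) (P : bool -> qop n m) : Prop :=
  (forall b, qadj (P b) = P b) /\
  (forall b, qmul (P b) (P b) = P b) /\
  (forall a c, P false a c + P true a c = qid (n:=n) (m:=m) a c).

Definition outcome_prob (n m : nat) (P : bool -> qop n m) (b : bool)
  (psi : qvec n m) : C := qnorm2 (qapply (P b) psi).

Definition exact_1query (n : nat) (D : {set bits n}) (f : bits n -> bool) : Prop :=
  exists (m : nat) (psi0 : qvec n m) (U0 U1 : qop n m) (P : bool -> qop n m),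
    [/\ qnorm2 psi0 = 1, unitary U0, unitary U1, proj_meas P &
      forall x, x \in D ->
        outcome_prob P (f x) (qapply U1 (qapply (oracle (m:=m) x) (qapply U0 psi0))) = 1].
End Quantum.

(* Main.v *)
Require Import Defs.
From HB Require Import structures.
From mathcomp Require Import all_boot all_order all_algebra.
From mathcomp Require Import complex.
From mathcomp Require Import reals.
From mathcomp Require Import spectral sesquilinear.
From Stdlib Require Import FunctionalExtensionality.
Set Implicit Arguments. Unset Strict Implicit. Unset Printing Implicit Defensive.
Import Order.TTheory GRing.Theory Num.Theory.
Local Open Scope ring_scope.
Local Open Scope sesquilinear_scope.

Lemma sum_enum (T : finType) (V : nmodType) (F : T -> V) :
  \sum_(a : T) F a = \sum_(i < #|T|) F (enum_val i).
Proof.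
rewrite (reindex (@enum_val T T)) //=.
by exists enum_rank => x _; [apply: enum_valK | apply: enum_rankK].
Qed.

Section Gen.
Variable C : numClosedFieldType.
Variable k : nat.

Definition inner (c d : 'cV[C]_k) : C := (c^t* *m d) 0 0.

Lemma adjM p q r (A : 'M[C]_(p, q)) (B : 'M[C]_(q, r)) : (A *m B)^t* = B^t* *m A^t*.
Proof. by rewrite trmx_mul map_mxM. Qed.

Lemma adjD p q (A B : 'M[C]_(p, q)) : (A + B)^t* = A^t* + B^t*.
Proof. by rewrite linearD /= map_mxD. Qed.

Lemma inner0 c : inner c c = 0 -> c = 0.
Proof.
rewrite /inner !mxE => /eqP; rewrite psumr_eq0; last first.
  by move=> i _; rewrite !mxE mulrC mul_conjC_ge0.
move=> /allP H; apply/matrixP => i j; rewrite (ord1 j) mxE.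
have := H i (mem_index_enum _); rewrite !mxE mulf_eq0 conjC_eq0.
by case/orP => /eqP.
Qed.

Lemma ortho_meas (P0 P1 : 'M[C]_k) s t :
  P0^t* = P0 -> P1^t* = P1 -> P0 *m P0 = P0 -> P1 *m P1 = P1 -> P0 + P1 = 1%:M ->
  inner s s = 1 -> inner (P0 *m s) (P0 *m s) = 1 ->
  inner t t = 1 -> inner (P1 *m t) (P1 *m t) = 1 -> inner s t = 0.
Proof.
move=> h0 h1 i0 i1 hs ns n0 nt n1.
have eP1 : P1 = 1%:M - P0 by rewrite -hs addrAC subrr add0r.
have o01 : P0 *m P1 = 0 by rewrite eP1 mulmxBr mulmx1 i0 subrr.
have o10 : P1 *m P0 = 0 by rewrite eP1 mulmxBl mul1mx i0 subrr.
have split c : inner c c = inner (P0 *m c) (P0 *m c) + inner (P1 *m c) (P1 *m c).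
  rewrite /inner !adjM h0 h1 !mulmxA -!(mulmxA _ P0 P0) -!(mulmxA _ P1 P1) i0 i1.
  by rewrite -[X in (X *m c) 0 0]mulmx1 -hs mulmxDr mulmxDl mxE.
have s1 : P1 *m s = 0.
  apply: inner0; have := split s; rewrite ns n0 => /esym /eqP.
  by rewrite -subr_eq0 addrC addKr => /eqP.
have t0 : P0 *m t = 0.
  apply: inner0; have := split t; rewrite nt n1 => /esym /eqP.
  by rewrite -subr_eq0 addrK => /eqP.
have -> : s = P0 *m s by rewrite -[LHS]mul1mx -hs mulmxDl s1 addr0.
have -> : t = P1 *m t by rewrite -[LHS]mul1mx -hs mulmxDl t0 add0r.
by rewrite /inner adjM h0 !mulmxA -(mulmxA _ P0 P1) o01 mulmx0 mul0mx mxE.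
Qed.

Lemma unitary_inner (U : 'M[C]_k) c d : U^t* *m U = 1%:M -> inner (U *m c) (U *m d) = inner c d.
Proof. by move=> hU; rewrite /inner adjM mulmxA -(mulmxA _ _ U) hU mulmx1. Qed.


Lemma conjmxK p q (M : 'M[C]_(p, q)) : map_mx Num.conj (map_mx Num.conj M) = M.
Proof. by apply/matrixP => i j; rewrite !mxE conjCK. Qed.

Lemma adj1 : (1%:M : 'M[C]_k)^t* = 1%:M.
Proof. by apply/matrixP => i j; rewrite !mxE conjC_nat eq_sym. Qed.

Lemma adjB p q (A B : 'M[C]_(p, q)) : (A - B)^t* = A^t* - B^t*.
Proof. by rewrite linearB /= map_mxB. Qed.

Section Proj.
Variable r : nat.
Variable B : 'M[C]_(r, k).
Hypothesis hB : B *m B^t* = 1%:M.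
Let Bc := map_mx Num.conj B.
Definition Pr := B^T *m Bc.

Lemma BcB : Bc *m B^T = 1%:M.
Proof.
have := congr1 (map_mx Num.conj) hB.
rewrite map_mxM conjmxK.
have -> : map_mx Num.conj (1%:M : 'M[C]_r) = 1%:M.
  by apply/matrixP => i j; rewrite !mxE conjC_nat.
by [].
Qed.

Lemma Pr_adj : Pr^t* = Pr.
Proof.
rewrite /Pr adjM.
have -> : Bc^t* = B^T by rewrite /Bc map_trmx conjmxK.
have -> : (B^T)^t* = Bc by rewrite trmxK.
by [].
Qed.

Lemma Pr_idem : Pr *m Pr = Pr.
Proof. by rewrite /Pr mulmxA -(mulmxA _ Bc) BcB mulmx1. Qed.

Lemma Pr_in (c : 'cV[C]_k) : (c^T <= B)%MS -> Pr *m c = c.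
Proof.
case/submxP => a ha.
have -> : c = B^T *m a^T by rewrite -trmx_mul -ha trmxK.
by rewrite /Pr -mulmxA (mulmxA Bc) BcB mul1mx.
Qed.

Lemma Pr_out (c : 'cV[C]_k) : Bc *m c = 0 -> Pr *m c = 0.
Proof. by move=> h; rewrite /Pr -mulmxA h mulmx0. Qed.

End Proj.

End Gen.

Section Tr.
Variable R : realType.
Local Notation C := (R[i]).
Variables n m : nat.
Local Notation I := (qidx n m).
Local Notation k := #|{: I}|.

Definition M_of (Q : qop R n m) : 'M[C]_k := \matrix_(i, j) Q (enum_val i) (enum_val j).
Definition v_of (v : qvec R n m) : 'cV[C]_k := \col_i v (enum_val i).
Definition Q_of (M : 'M[C]_k) : qop R n m := fun a b => M (enum_rank a) (enum_rank b).

Lemma Q_ofK M : M_of (Q_of M) = M.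
Proof. by apply/matrixP => i j; rewrite !mxE /Q_of !enum_valK. Qed.

Lemma M_of_inj : injective M_of.
Proof.
move=> A B /matrixP H; apply: functional_extensionality => a;
apply: functional_extensionality => b.
by have := H (enum_rank a) (enum_rank b); rewrite !mxE !enum_rankK.
Qed.

Lemma v_of_inj : injective v_of.
Proof.
move=> A B /matrixP H; apply: functional_extensionality => a.
by have := H (enum_rank a) 0; rewrite !mxE !enum_rankK.
Qed.

Lemma M_of_mul A B : M_of (qmul A B) = M_of A *m M_of B.
Proof.
by apply/matrixP => i j; rewrite !mxE /qmul sum_enum; apply: eq_bigr => l _; rewrite !mxE.
Qed.

Lemma M_of_adj A : M_of (qadj A) = (M_of A)^t*.
Proof. by apply/matrixP => i j; rewrite !mxE. Qed.

Lemma M_of_id : M_of (@qid R n m) = 1%:M.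
Proof.
apply/matrixP => i j; rewrite !mxE /qid.
by rewrite (inj_eq enum_val_inj).
Qed.

Lemma v_of_apply U v : v_of (qapply U v) = M_of U *m v_of v.
Proof.
by apply/matrixP => i j; rewrite !mxE /qapply sum_enum; apply: eq_bigr => l _; rewrite !mxE.
Qed.

Lemma qnorm2E v : qnorm2 v = inner (v_of v) (v_of v).
Proof.
rewrite /qnorm2 /inner !mxE sum_enum; apply: eq_bigr => l _; rewrite !mxE mulrC.
done.
Qed.


Lemma oracle_apply x v : qapply (@oracle R n m x) v = (fun a => Fsign x a.1 * v a).
Proof.
apply: functional_extensionality => a; rewrite /qapply (bigD1 a) //= /oracle eqxx mul1r.
rewrite big1 ?addr0 // => b /negbTE; rewrite eq_sym => ->; by rewrite !mul0r.
Qed.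

Lemma Fsign_mul (x y : bits n) i : (Fsign x i : C) * Fsign y i = Fsign (bxor x y) i.
Proof.
rewrite /Fsign; case: unlift => [j|]; last by rewrite mulr1.
by rewrite ffunE signr_addb.
Qed.

Lemma Fsign_conj (x : bits n) i : (Fsign x i : C)^* = Fsign x i.
Proof.
rewrite /Fsign; case: unlift => [j|]; last by rewrite rmorph1.
by case: (x j); rewrite /= ?expr0 ?expr1 ?rmorph1 ?rmorphN1.
Qed.

Lemma Fsign_xx (x : bits n) i : (Fsign (bxor x x) i : C) = 1.
Proof. by rewrite /Fsign; case: unlift => [j|] //; rewrite ffunE addbb. Qed.

Lemma inner_oracle (x y : bits n) (ph : qvec R n m) :
  inner (v_of (fun a => Fsign x a.1 * ph a)) (v_of (fun a => Fsign y a.1 * ph a)) =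
  \sum_(a : I) Fsign (bxor x y) a.1 * (ph a * (ph a)^*).
Proof.
rewrite /inner mxE [RHS]sum_enum; apply: eq_bigr => l _; rewrite !mxE.
rewrite rmorphM /= Fsign_conj -Fsign_mul.
set A := Fsign x _; set B := Fsign y _; set p := ph _.
by rewrite [p * _]mulrC !mulrA [A * _ * B]mulrAC.
Qed.

End Tr.

Section Fwd.
Variable R : realType.
Local Notation C := (R[i]).

Lemma unitary_M n m (U : qop R n m) : unitary U -> (M_of U)^t* *m M_of U = 1%:M.
Proof. by case=> _ h; rewrite -M_of_adj -M_of_mul h M_of_id. Qed.

Lemma ReFs n (z : bits n) i (w : C) : complex.Re (Fsign z i * w) = Fsign z i * complex.Re w.
Proof.
rewrite /Fsign; case: unlift => [j|]; last by rewrite !mul1r.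
by case: (z j); rewrite /= ?expr0 ?expr1 ?mulN1r ?mul1r ?raddfN.
Qed.

Lemma forward n (D : {set bits n}) (f : bits n -> bool) :
  exact_1query R D f ->
  exists beta : 'I_n.+1 -> R,
     [/\ (forall i, 0 <= beta i),
         \sum_(i < n.+1) beta i = 1 &
         forall x y, x \in D -> y \in D -> f x = false -> f y = true ->
           \sum_(i < n.+1) Fsign (bxor x y) i * beta i = 0].
Proof.
rewrite /exact_1query => -[m [psi0 [U0 [U1 [P [hpsi hU0 hU1 [hPadj [hPidem hPsum]] hout]]]]]].
set ph := qapply U0 psi0.
pose S (i : 'I_n.+1) : C := \sum_(j < m) ph (i, j) * (ph (i, j))^*.
have S_ge0 i : 0 <= S i by apply: sumr_ge0 => j _; apply: mul_conjC_ge0.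
have nph : qnorm2 ph = 1.
  by rewrite /ph qnorm2E v_of_apply unitary_inner ?unitary_M // -qnorm2E.
have sumS : \sum_i S i = 1 by rewrite -nph /qnorm2 /S pair_big; apply: eq_bigr => -[i j].
exists (fun i => complex.Re (S i)); split.
- by move=> i; have := S_ge0 i; rewrite lecE => /andP[_].
- by rewrite -raddf_sum sumS.
move=> x y xD yD fx fy.
have key : inner (v_of (fun a => Fsign x a.1 * ph a)) (v_of (fun a => Fsign y a.1 * ph a)) = 0.
  rewrite -(unitary_inner _ _ (unitary_M hU1)) -!v_of_apply -!oracle_apply.
  have Pherm b : (M_of (P b))^t* = M_of (P b) by rewrite -M_of_adj hPadj.
  have Pid b : M_of (P b) *m M_of (P b) = M_of (P b) by rewrite -M_of_mul hPidem.
  have Psum : M_of (P false) + M_of (P true) = 1%:M.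
    by rewrite -M_of_id; apply/matrixP => i j; rewrite !mxE hPsum.
  have nst z : inner (v_of (qapply U1 (qapply (@oracle R n m z) ph)))
                     (v_of (qapply U1 (qapply (@oracle R n m z) ph))) = 1.
    rewrite v_of_apply unitary_inner ?unitary_M // oracle_apply inner_oracle -nph /qnorm2.
    by apply: eq_bigr => a _; rewrite Fsign_xx mul1r.
  apply: (ortho_meas (Pherm false) (Pherm true) (Pid false) (Pid true) Psum).
  + exact: nst.
  + by have := hout x xD; rewrite fx /outcome_prob qnorm2E v_of_apply.
  + exact: nst.
  + by have := hout y yD; rewrite fy /outcome_prob qnorm2E v_of_apply.
move: key; rewrite inner_oracle => key.
have -> : \sum_(i < n.+1) Fsign (bxor x y) i * complex.Re (S i) =
  complex.Re (\sum_(i < n.+1) Fsign (bxor x y) i * S i).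
  by rewrite raddf_sum; apply: eq_bigr => i _; exact: (esym (ReFs _ _ _)).
have -> : \sum_(i < n.+1) Fsign (bxor x y) i * S i = 0.
  rewrite -[RHS]key (eq_bigr (fun i => \sum_(j < m) Fsign (bxor x y) i * (ph (i, j) * (ph (i, j))^*))).
    by rewrite pair_big /=; apply: eq_bigr => -[i j].
  by move=> i _; rewrite /S mulr_sumr.
by [].
Qed.
End Fwd.

Section Bwd.
Local Open Scope complex_scope.
Variable R : realType.
Local Notation C := (R[i]).

Lemma FsC n (z : bits n) i : (Fsign z i : C) = (Fsign z i : R)%:C.
Proof.
rewrite /Fsign; case: unlift => [j|] //.
by case: (z j); rewrite /= ?expr0 ?expr1 ?rmorphN1 ?rmorph1.
Qed.

Lemma qapply_id n m (v : qvec R n m) : qapply (@qid R n m) v = v.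
Proof. by apply: v_of_inj; rewrite v_of_apply M_of_id mul1mx. Qed.

Lemma backward n (D : {set bits n}) (f : bits n -> bool) (beta : 'I_n.+1 -> R) :
  (forall i, 0 <= beta i) -> \sum_(i < n.+1) beta i = 1 ->
  (forall x y, x \in D -> y \in D -> f x = false -> f y = true ->
           \sum_(i < n.+1) Fsign (bxor x y) i * beta i = 0) ->
  exact_1query R D f.
Proof.
move=> b0 b1 borth.
pose ph : qvec R n 1 := fun a => (Num.sqrt (beta a.1))%:C.
have phph a : ph a * (ph a)^* = (beta a.1)%:C.
  by rewrite /ph -[Num.conj _]/(conjc _) conjc_real -rmorphM /= -expr2 sqr_sqrtr.
have sumI (F : 'I_n.+1 -> C) : \sum_(a : qidx n 1) F a.1 = \sum_i F i.
  transitivity (\sum_i \sum_(j < 1) F i); last by apply: eq_bigr => i _; rewrite big_ord1.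
  by rewrite pair_big.
pose vx (x : bits n) : qvec R n 1 := fun a => Fsign x a.1 * ph a.
pose c x := v_of (vx x).
have innc x y : inner (c x) (c y) = (\sum_i Fsign (bxor x y) i * beta i)%:C.
  rewrite /c /vx inner_oracle rmorph_sum /=.
  rewrite (eq_bigr (fun a => Fsign (bxor x y) a.1 * (beta a.1)%:C)); last first.
    by move=> a _; rewrite phph.
  rewrite (sumI (fun i => Fsign (bxor x y) i * (beta i)%:C)); apply: eq_bigr => i _; by rewrite FsC rmorphM.
have nc x : inner (c x) (c x) = 1.
  rewrite innc (eq_bigr (fun i => beta i)) ?b1 //.
  by move=> i _; rewrite /Fsign; case: unlift => [j|]; rewrite ?mul1r // ffunE addbb mul1r.
have bxorC x y : bxor x y = bxor y x by apply/ffunP => i; rewrite !ffunE addbC.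
pose A : 'M[C]_(#|{: bits n}|, #|{: qidx n 1}|) := \matrix_(i, l)
  (if (enum_val i \in D) && f (enum_val i) then c (enum_val i) l 0 else 0).
pose B := schmidt (row_base A).
have hB : B *m B^t* = 1%:M by apply/unitarymxP/schmidt_unitarymx/rank_leq_col.
have eBA : (B :=: A)%MS.
  by apply: eqmx_trans (eq_row_base A); apply: eqmx_schmidt_free; apply: row_base_free.
pose P1 := Pr B.
pose P0 := 1%:M - P1.
have hP1in y : y \in D -> f y = true -> P1 *m c y = c y.
  move=> yD fy; apply: Pr_in => //.
  have -> : (c y)^T = row (enum_rank y) A.
    by apply/matrixP => i l; rewrite !mxE enum_rankK yD fy.
  by rewrite eBA row_sub.
have hP1out x : x \in D -> f x = false -> P1 *m c x = 0.
  move=> xD fx; apply: Pr_out.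
  have /submxP [X ->] : (B <= A)%MS by rewrite eBA.
  rewrite map_mxM -mulmxA.
  have -> : map_mx Num.conj A *m c x = 0.
    apply/matrixP => i j; rewrite !mxE.
    case hy: ((enum_val i \in D) && f (enum_val i)).
      case/andP: (hy) => yD fy.
      have H := innc (enum_val i) x; rewrite bxorC borth // rmorph0 /inner mxE in H.
      rewrite (ord1 j) -[RHS]H; apply: eq_bigr => l _; rewrite !mxE hy.
      done.
    by apply: big1 => l _; rewrite !mxE hy rmorph0 mul0r.
  by rewrite mulmx0.
pose P (b : bool) : qop R n 1 := Q_of (if b then P1 else P0).
exists 1%N, ph, (@qid R n 1), (@qid R n 1), P; split.
- rewrite /qnorm2 (eq_bigr (fun a => (beta a.1)%:C)); last by move=> a _; rewrite phph.
  by rewrite (sumI (fun i => (beta i)%:C)) -rmorph_sum b1.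
- by split; apply: M_of_inj; rewrite M_of_mul M_of_adj M_of_id adj1 mul1mx.
- by split; apply: M_of_inj; rewrite M_of_mul M_of_adj M_of_id adj1 mul1mx.
- have P1adj : P1^t* = P1 by apply: Pr_adj.
  have P1id : P1 *m P1 = P1 by apply: Pr_idem.
  split; [|split].
  + move=> b; apply: M_of_inj; rewrite M_of_adj /P Q_ofK; case: b => //.
    by rewrite /P0 adjB adj1 P1adj.
  + move=> b; apply: M_of_inj; rewrite M_of_mul /P Q_ofK; case: b => //.
    by rewrite /P0 mulmxBl mul1mx mulmxBr mulmx1 P1id subrr subr0.
  + move=> a d; rewrite /P /Q_of /P0 /qid !mxE addrNK.
    by rewrite (inj_eq enum_rank_inj).
- move=> x xD; rewrite !qapply_id oracle_apply /outcome_prob qnorm2E v_of_apply /P Q_ofK.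
  rewrite -/(vx x) -/(c x).
  case fx: (f x).
  + by rewrite hP1in.
  + by rewrite /P0 mulmxBl mul1mx hP1out // subr0.
Qed.
End Bwd.

Theorem theorem1 (R : realType) (n : nat) (D : {set bits n}) (f : bits n -> bool) :
  (exists x y, [/\ x \in D, y \in D & f x != f y]) ->
  (exact_1query R D f <->
   exists beta : 'I_n.+1 -> R,
     [/\ (forall i, 0 <= beta i),
         \sum_(i < n.+1) beta i = 1 &
         forall x y, x \in D -> y \in D -> f x = false -> f y = true ->
           \sum_(i < n.+1) Fsign (bxor x y) i * beta i = 0]).
Proof.
move=> _; split; first exact: forward.
by case=> beta [b0 b1 bo]; apply: backward b0 b1 bo.
Qed.
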